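(* Let $G$ be a locally precompact, sequentially complete topological group. Then every closed zero-dimensional metrizable subgroup of $G$ is discrete if and only if every compact metrizable zero-dimensional subgroup of $G$ is finite. In particular, these two conditions are equivalent for every locally countably compact topological group.
   Context: All topological groups are Hausdorff. A topological group is locally precompact if its completion with respect to the two-sided uniformity is locally compact; it is sequentially complete if every Cauchy sequence with respect to the two-sided uniformity converges in $G$; it is locally countably compact if some open neighbourhood of the identity has countably compact closure. A space is zero-dimensional if it has a base of clopen sets. *)

(* Defs.v *)
From HB Require Import structures.
From mathcomp Require Import all_boot all_order.
From mathcomp Require Import boolp classical_sets functions cardinality topology.
From Stdlib Require Rdefinitions.

Set Implicit Arguments.
Unset Strict Implicit.
Unset Printing Implicit Defensive.

Local Open Scope classical_set_scope.

Section TopGroup.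
Context {T : topologicalType} (mul : T -> T -> T) (e : T) (inv : T -> T).

Definition topological_group : Prop :=
  [/\ hausdorff_space T,
      (forall x y z, mul x (mul y z) = mul (mul x y) z),
      (forall x, mul e x = x /\ mul x e = x),
      (forall x, mul (inv x) x = e /\ mul x (inv x) = e) &
      (continuous (fun p : T * T => mul p.1 p.2) /\ continuous inv)].

Definition is_subgroup (S : set T) : Prop :=
  [/\ S e, (forall x y, S x -> S y -> S (mul x y)) & (forall x, S x -> S (inv x))].

Definition two_sided_cauchy_seq (u : nat -> T) : Prop :=
  forall U, nbhs e U -> exists N, forall m n, (N <= m)%N -> (N <= n)%N ->
    U (mul (inv (u m)) (u n)) /\ U (mul (u m) (inv (u n))).

Definition sequentially_complete : Prop :=
  forall u : nat -> T, two_sided_cauchy_seq u -> exists x : T, u @ \oo --> x.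

Definition two_sided_cauchy_filter (F : set_system T) : Prop :=
  forall U, nbhs e U -> exists A, F A /\
    forall x y, A x -> A y -> U (mul (inv x) y) /\ U (mul x (inv y)).

Definition raikov_complete : Prop :=
  forall F : set_system T, ProperFilter F -> two_sided_cauchy_filter F ->
    exists x : T, F --> x.

Definition locally_compact_group : Prop :=
  exists U, nbhs e U /\ compact (closure U).

Definition rel_open (S A : set T) : Prop := exists O, open O /\ A = O `&` S.
Definition rel_closed (S A : set T) : Prop := exists C, closed C /\ A = C `&` S.

Definition zero_dimensional_sub (S : set T) : Prop :=
  forall x U, S x -> open U -> U x ->
    exists B, [/\ rel_open S B, rel_closed S B, B x & B `<=` U].

Definition discrete_sub (S : set T) : Prop :=
  forall x, S x -> exists U, [/\ open U, U x & U `&` S = [set x]].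

Definition metrizable_sub (S : set T) : Prop :=
  exists d : T -> T -> Rdefinitions.R,
    [/\ (forall x y, S x -> S y -> (d x y = Rdefinitions.R0 <-> x = y)),
        (forall x y, S x -> S y -> d x y = d y x),
        (forall x y z, S x -> S y -> S z -> Rdefinitions.Rle (d x z) (Rdefinitions.Rplus (d x y) (d y z))) &
        (forall x A, S x ->
           ((exists O, [/\ open O, O x & O `&` S `<=` A]) <->
            (exists eps, Rdefinitions.Rlt Rdefinitions.R0 eps /\
               forall y, S y -> Rdefinitions.Rlt (d x y) eps -> A y)))].

Definition countably_compact (A : set T) : Prop :=
  forall U : nat -> set T, (forall n, open (U n)) ->
    (forall x, A x -> exists n, U n x) ->
    exists N, forall x, A x -> exists n, (n < N)%N /\ U n x.

Definition locally_countably_compact : Prop :=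
  exists U, [/\ open U, U e & countably_compact (closure U)].

End TopGroup.

Definition locally_precompact {T : topologicalType}
    (mul : T -> T -> T) (e : T) (inv : T -> T) : Prop :=
  exists (H : topologicalType) (mulH : H -> H -> H) (eH : H) (invH : H -> H)
         (j : T -> H),
    [/\ topological_group mulH eH invH,
        raikov_complete mulH eH invH,
        locally_compact_group eH /\ closure (range j) = setT,
        (injective j /\ forall x y, j (mul x y) = mulH (j x) (j y)) &
        (continuous j /\ forall x U, nbhs x U ->
            exists V, nbhs (j x) V /\ j @^-1` V `<=` U)].

Definition closed_zd_metrizable_subgroups_discrete {T : topologicalType}
    (mul : T -> T -> T) (e : T) (inv : T -> T) : Prop :=
  forall S : set T, is_subgroup mul e inv S -> closed S ->
    zero_dimensional_sub S -> metrizable_sub S -> discrete_sub S.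

Definition compact_zd_metrizable_subgroups_finite {T : topologicalType}
    (mul : T -> T -> T) (e : T) (inv : T -> T) : Prop :=
  forall S : set T, is_subgroup mul e inv S -> compact S ->
    metrizable_sub S -> zero_dimensional_sub S -> finite_set S.

(* Main.v *)
Require Import Defs.
From mathcomp Require Import all_boot all_order.
From mathcomp Require Import boolp classical_sets functions cardinality topology.
From Stdlib Require Rdefinitions.
From Stdlib Require Import Rdefinitions Raxioms RIneq Rtrigo_def Lra.
Set Implicit Arguments.
Unset Strict Implicit.
Unset Printing Implicit Defensive.
Local Open Scope classical_set_scope.


Section G.
Context {T : topologicalType} (mul : T -> T -> T) (e : T) (inv : T -> T).
Hypothesis TG : topological_group mul e inv.

Lemma g_assoc x y z : mul x (mul y z) = mul (mul x y) z.
Proof. by case: TG => _ A _ _ _; apply: A. Qed.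
Lemma g_e1 x : mul e x = x. Proof. by case: TG => _ _ A _ _; case: (A x). Qed.
Lemma g_1e x : mul x e = x. Proof. by case: TG => _ _ A _ _; case: (A x). Qed.
Lemma g_Vx x : mul (inv x) x = e. Proof. by case: TG => _ _ _ A _; case: (A x). Qed.
Lemma g_xV x : mul x (inv x) = e. Proof. by case: TG => _ _ _ A _; case: (A x). Qed.
Lemma g_hausdorff : hausdorff_space T. Proof. by case: TG. Qed.
Lemma g_mulC : continuous (fun p : T * T => mul p.1 p.2). Proof. by case: TG => _ _ _ _ []. Qed.
Lemma g_invC : continuous inv. Proof. by case: TG => _ _ _ _ []. Qed.

Lemma g_uniq_inv a b : mul a b = e -> a = inv b.
Proof.
move=> h; have : mul (mul a b) (inv b) = mul e (inv b) by rewrite h.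
by rewrite -g_assoc g_xV g_1e g_e1.
Qed.
Lemma g_invK x : inv (inv x) = x.
Proof. by symmetry; apply: g_uniq_inv; rewrite g_xV. Qed.
Lemma g_inv_e : inv e = e.
Proof. by symmetry; apply: g_uniq_inv; rewrite g_e1. Qed.
Lemma g_invM x y : inv (mul x y) = mul (inv y) (inv x).
Proof.
symmetry; apply: g_uniq_inv.
by rewrite -g_assoc (g_assoc (inv x)) g_Vx g_e1 g_Vx.
Qed.
Lemma g_VxK x y : mul (inv x) (mul x y) = y.
Proof. by rewrite g_assoc g_Vx g_e1. Qed.
Lemma g_xVK x y : mul x (mul (inv x) y) = y.
Proof. by rewrite g_assoc g_xV g_e1. Qed.

Lemma mul_near x y W : nbhs (mul x y) W ->
  exists A1 A2, [/\ nbhs x A1, nbhs y A2 & forall a b, A1 a -> A2 b -> W (mul a b)].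
Proof.
move=> hW; have := @g_mulC (x, y) W hW; case=> -[A1 A2] /= [h1 h2] sub.
exists A1, A2; split => // a b a1 b2; exact: (sub (a, b)).
Qed.

Lemma mulr_cont b : continuous (fun x => mul x b).
Proof.
move=> x W /= /mul_near [A1 [A2 [h1 h2 H]]].
apply: filterS h1 => a a1; apply: H => //; exact: nbhs_singleton.
Qed.
Lemma mull_cont a : continuous (fun x => mul a x).
Proof.
move=> x W /= /mul_near [A1 [A2 [h1 h2 H]]].
apply: filterS h2 => b b2; apply: H => //; exact: nbhs_singleton.
Qed.
Lemma mulVr_cont b : continuous (fun x => mul (inv x) b).
Proof.
move=> x; apply: (continuous_comp (f := inv) (g := fun x => mul x b)).
  exact: g_invC. exact: mulr_cont.
Qed.

Lemma nbhs_sym V : nbhs e V -> exists Q, nbhs e Q /\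
  forall a b, Q a -> Q b -> V (mul (inv a) b) /\ V (mul a (inv b)).
Proof.
move=> hV; have : nbhs (mul e e) V by rewrite g_e1.
move=> /mul_near [A1 [A2 [h1 h2 H]]].
have hi : forall A, nbhs e A -> nbhs e (inv @^-1` A).
  by move=> A hA; apply: g_invC; rewrite g_inv_e.
exists (A1 `&` A2 `&` (inv @^-1` A1) `&` (inv @^-1` A2)); split.
  by apply: filterI; [apply: filterI; [apply: filterI|]|]; auto.
move=> a b [[[a1 a2] a3 a4]] [[[b1 b2] b3 b4]]; split; apply: H => //.
Qed.

End G.


Section Metric.
Context {T : topologicalType}.

Definition seqcc (A : set T) := forall u : nat -> T, (forall n, A (u n)) ->
  exists y, A y /\ forall W, nbhs y W -> forall N, exists n, (N <= n)%N /\ W (u n).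

Variables (S : set T) (d : T -> T -> R).
Hypothesis d0 : forall x y, S x -> S y -> (d x y = R0 <-> x = y).
Hypothesis dsym : forall x y, S x -> S y -> d x y = d y x.
Hypothesis dtri : forall x y z, S x -> S y -> S z -> Rle (d x z) (Rplus (d x y) (d y z)).
Hypothesis dtop : forall x A, S x ->
           ((exists O, [/\ open O, O x & O `&` S `<=` A]) <->
            (exists eps, Rlt R0 eps /\ forall y, S y -> Rlt (d x y) eps -> A y)).

Lemma ball_open x r : S x -> (0 < r)%R ->
  exists O, [/\ open O, O x & forall y, O y -> S y -> (d x y < r)%R].
Proof.
move=> Sx r0; have [_ /(_ _)] := dtop (fun y => (d x y < r)%R) Sx.
case; first by exists r; split.
by move=> O [oO Ox sub]; exists O; split => // y Oy Sy; apply: sub.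
Qed.

Lemma nbhs_ball x W : S x -> nbhs x W ->
  exists eps, (0 < eps)%R /\ forall y, S y -> (d x y < eps)%R -> W y.
Proof.
move=> Sx; rewrite nbhsE => -[O [oO Ox] OW].
have [h _] := dtop W Sx; apply: h; exists O; split => // y [Oy _]; exact: OW.
Qed.

Lemma arch eps : (0 < eps)%R -> exists m, (/ INR m.+1 < eps)%R.
Proof.
move=> /archimed_cor1 [N [h1 h2]]; exists N.-1.
by rewrite prednK //; apply/ltP.
Qed.

Lemma inv_pos m : (0 < / INR m.+1)%R.
Proof. apply: Rinv_0_lt_compat; apply: lt_0_INR; apply/ltP; done. Qed.

Lemma inv_le m n : (m <= n)%N -> (/ INR n.+1 <= / INR m.+1)%R.
Proof.
move=> h; apply: Rinv_le_contravar; first by apply: lt_0_INR; apply/ltP.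
by apply: le_INR; apply/leP.
Qed.

Lemma totally_bounded A r : A `<=` S -> seqcc A -> (0 < r)%R ->
  exists s : seq T, (forall c, c \in s -> A c) /\
    forall x, A x -> exists c, c \in s /\ (d c x < r)%R.
Proof.
move=> AS cc r0.
have [[a0 Aa0]|A0] := pselect (exists a, A a); last first.
  by exists [::]; split => // x Ax; case: A0; exists x.
apply: contrapT => Hn.
have H : forall s : seq T, exists x, (forall c, c \in s -> A c) ->
    A x /\ forall c, c \in s -> ~ (d c x < r)%R.
  move=> s; have [sA|nsA] := pselect (forall c, c \in s -> A c); last by exists a0.
  apply: contrapT => hn; apply: Hn; exists s; split => // x Ax.
  apply: contrapT => nx; apply: hn; exists x => _; split => // c cs dc.
  by apply: nx; exists c.
have [g hg] := choice H.
pose fix lst n := if n is k.+1 then rcons (lst k) (g (lst k)) else [::].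
have lstA : forall n c, c \in lst n -> A c.
  elim=> [//|n IH] c /=; rewrite mem_rcons inE => /orP [/eqP ->|]; last exact: IH.
  by case: (hg (lst n) (IH)).
pose u n := g (lst n).
have uA n : A (u n) by case: (hg (lst n) (lstA n)).
have ulst : forall i n, (i < n)%N -> u i \in lst n.
  move=> i; elim=> [//|n IH]; rewrite ltnS leq_eqVlt => /orP [/eqP ->|/IH h] /=;
  by rewrite mem_rcons inE ?eqxx // h orbT.
have sep : forall i n, (i < n)%N -> ~ (d (u i) (u n) < r)%R.
  by move=> i n lt; case: (hg (lst n) (lstA n)) => _; apply; apply: ulst.
have [y [Ay cl]] := cc u uA.
have [O [oO Oy Ob]] := @ball_open y (r / 2)%R (AS _ Ay) ltac:(lra).
have nO : nbhs y O by apply: open_nbhs_nbhs.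
have [n1 [_ h1]] := cl O nO 0%N.
have [n2 [l2 h2]] := cl O nO n1.+1.
apply: (sep n1 n2 l2).
have := dtri (AS _ (uA n1)) (AS _ Ay) (AS _ (uA n2)).
have := Ob _ h1 (AS _ (uA n1)); have := Ob _ h2 (AS _ (uA n2)).
rewrite (dsym (AS _ (uA n1)) (AS _ Ay)); lra.
Qed.

Lemma ultra_seq (F : set_system T) (P : T -> set T) (s : seq T) :
  UltraFilter F -> F (fun x => exists c, c \in s /\ P c x) ->
  exists c, c \in s /\ F (P c).
Proof.
move=> FU; have FP : ProperFilter F by exact: ultra_proper.
elim: s => [|c s IH] h.
  by have [x [c []]] := filter_ex h.
have [Fc|Fnc] := in_ultra_setVsetC (P c) FU; first by exists c; rewrite inE eqxx.
have : F (fun x => exists c0, c0 \in s /\ P c0 x).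
  apply: filterS2 h Fnc => x [c0 [+ Pc0]] nPc.
  rewrite inE => /orP [/eqP E|ins]; first by subst c0.
  by exists c0.
by move=> /IH [c0 [ins Fc0]]; exists c0; rewrite inE ins orbT.
Qed.

Lemma seqcc_compact A : A `<=` S -> seqcc A -> compact A.
Proof.
move=> AS cc; rewrite compact_ultra => F FU FA.
have FP : ProperFilter F by exact: ultra_proper.
have H : forall n, exists c, A c /\ F (fun z => A z /\ (d c z < / INR n.+1)%R).
  move=> n; have [s [sA cov]] := totally_bounded AS cc (inv_pos n).
  have : F (fun x => exists c, c \in s /\ (fun c z => A z /\ (d c z < / INR n.+1)%R) c x).
    by apply: filterS FA => x Ax; have [c [cs dc]] := cov x Ax; exists c.
  by move=> /(ultra_seq FU) [c [cs Fc]]; exists c; split => //; apply: sA.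
have [c hc] := choice H.
have [y [Ay cl]] := cc c (fun n => (hc n).1).
exists y; split => // W hW.
have [eps [e0 epsW]] := nbhs_ball (AS _ Ay) hW.
have [O [oO Oy Ob]] := @ball_open y (eps / 2)%R (AS _ Ay) ltac:(lra).
have [m hm] := @arch (eps / 2)%R ltac:(lra).
have [n [mn On]] := cl O (open_nbhs_nbhs (conj oO Oy)) m.
apply: filterS (hc n).2 => z [Az dz].
apply: epsW; first exact: AS.
have := dtri (AS _ Ay) (AS _ (hc n).1) (AS _ Az).
have := Ob _ On (AS _ (hc n).1). have := inv_le mn. lra.
Qed.

End Metric.


Lemma closed_preimage {T U : topologicalType} (f : T -> U) (C : set U) :
  continuous f -> closed C -> closed (f @^-1` C).
Proof.
move=> fc cC x clx; apply: cC => B hB.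
have := clx _ (fc x B hB); case=> y [Cy By]; by exists (f y).
Qed.

Lemma hausdorff_nbhs_neq {T : topologicalType} (a e : T) :
  hausdorff_space T -> a <> e -> nbhs e (fun z => z <> a).
Proof.
move=> hT ae; apply: contrapT => hn; apply: ae; symmetry; apply: hT.
move=> A B hA hB; exists a; split; last exact: nbhs_singleton.
apply: contrapT => nA; apply: hn; apply: filterS hA => z Az za; subst; exact: nA.
Qed.

Lemma finite_isolated {T : topologicalType} (e : T) (s : seq T) :
  hausdorff_space T -> nbhs e (fun z => forall a, a \in s -> z = a -> a = e).
Proof.
move=> hT; elim: s => [|a s IH].
  by apply: filterS (@filterT _ (nbhs e) _) => z _ a.
have [->|ae] := pselect (a = e).
  apply: filterS IH => z h b; rewrite inE => /orP [/eqP ->//|]; exact: h.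
apply: filterS2 IH (hausdorff_nbhs_neq hT ae) => z h za b.
rewrite inE => /orP [/eqP -> E|]; [by subst|exact: h].
Qed.

Section Core.
Context {T : topologicalType} (mul : T -> T -> T) (e : T) (inv : T -> T).
Hypothesis TG : topological_group mul e inv.

Lemma metrizable_subS (S P : set T) : P `<=` S -> metrizable_sub S -> metrizable_sub P.
Proof.
move=> PS [d [d0 dsym dtri dtop]]; exists d; split.
- by move=> x y Px Py; apply: d0; apply: PS.
- by move=> x y Px Py; apply: dsym; apply: PS.
- by move=> x y z Px Py Pz; apply: dtri; apply: PS.
move=> x A Px; have [h1 h2] := dtop x (fun y => P y -> A y) (PS _ Px); split.
  case=> O [oO Ox OA]; have [] := h1.
    by exists O; split => // y [Oy Sy] Py; apply: OA.
  by move=> eps [e0 H]; exists eps; split => // y Py dy; apply: H => //; apply: PS.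
case=> eps [e0 H]; have [] := h2.
  by exists eps; split => // y Sy dy Py; apply: H.
by move=> O [oO Ox OA]; exists O; split => // y [Oy Py]; apply: (OA y) => //; split => //; apply: PS.
Qed.

Lemma zd_subS (S P : set T) : P `<=` S -> zero_dimensional_sub S -> zero_dimensional_sub P.
Proof.
move=> PS zd x U Px oU Ux; have [B [[O [oO BO]] [C [cC BC]] Bx BU]] := zd x U (PS _ Px) oU Ux.
exists (B `&` P); split.
- exists O; split => //; rewrite BO; apply/seteqP; split => y /=; first by move=> [[]].
  by move=> [Oy Py]; split => //; split => //; apply: PS.
- exists C; split => //; rewrite BC; apply/seteqP; split => y /=; first by move=> [[]].
  by move=> [Oy Py]; split => //; split => //; apply: PS.
- by split.
- by move=> y [By _]; apply: BU.
Qed.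

Lemma core (S N : set T) :
  is_subgroup mul e inv S -> zero_dimensional_sub S -> metrizable_sub S ->
  open N -> N e ->
  (forall C, closed C -> C `&` S `<=` N -> seqcc (C `&` S)) ->
  compact_zd_metrizable_subgroups_finite mul e inv ->
  discrete_sub S.
Proof.
move=> [Se SM SV] zd met oN Ne Hcc Hfin.
have met' := met; case: met' => [d [d0 dsym dtri dtop]].
have [B [[O' [oO' BO']] [C' [cC' BC']] Be BN]] := zd e N Se oN Ne.
have BS : B `<=` S by rewrite BO' => y [].
have Bcc : seqcc B by rewrite BC'; apply: Hcc => //; rewrite -BC'.
have Bc : compact B by apply: (seqcc_compact dsym dtri dtop BS Bcc).
have NC := (compact_near_coveringP B).1 Bc.
have hW0 : nbhs e (fun w => forall x, B x -> O' (mul w x)).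
  apply: (NC T (nbhs e) (fun w x => O' (mul w x))) => x Bx.
  have hx : nbhs (mul e x) O'.
    rewrite (g_e1 TG); apply: open_nbhs_nbhs; split => //.
    by move: Bx; rewrite BO' => -[].
  have [A1 [A2 [h1 h2 H]]] := mul_near TG hx.
  by exists (A2, A1) => //= -[x' w] /= [h2' h1']; apply: H.
pose W0 := fun w => forall x, B x -> O' (mul w x).
pose W' := W0 `&` (inv @^-1` W0).
have hW' : nbhs e W'.
  apply: filterI => //; apply: (g_invC TG); rewrite (g_inv_e TG); exact: hW0.
pose P := fun x => S x /\ forall b, B b -> B (mul x b) /\ B (mul (inv x) b).
pose C'' := fun x => forall b, B b -> C' (mul x b) /\ C' (mul (inv x) b).
have cC'' : closed C''.
  move=> x clx b Bb; split.
    have : closed ((fun x => mul x b) @^-1` C').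
      by apply: closed_preimage => //; exact: (mulr_cont TG).
    apply; apply: (closureS _ clx) => y Cy; exact: (Cy b Bb).1.
  have : closed ((fun x => mul (inv x) b) @^-1` C').
    by apply: closed_preimage => //; exact: (mulVr_cont TG).
  apply; apply: (closureS _ clx) => y Cy; exact: (Cy b Bb).2.
have PC : P = C'' `&` S.
  apply/seteqP; split => x.
    move=> [Sx H]; split => // b Bb; have [h1 h2] := H b Bb.
    by move: h1 h2; rewrite BC' => -[? _] [? _].
  move=> [H Sx]; split => // b Bb; have [h1 h2] := H b Bb.
  have Sb := BS _ Bb.
  by rewrite BC'; split; split => //; [apply: SM|apply: SM => //; apply: SV].
have PB : P `<=` B.
  by move=> x [Sx H]; have := (H e Be).1; rewrite (g_1e TG).
have PS : P `<=` S by move=> x [].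
have Pcc : seqcc P.
  by rewrite PC; apply: Hcc => //; rewrite -PC => x /PB /BN.
have Pc : compact P by apply: (seqcc_compact dsym dtri dtop PS Pcc).
have Psub : is_subgroup mul e inv P.
  split.
  - split => // b Bb; rewrite (g_inv_e TG) (g_e1 TG); by split.
  - move=> x y [Sx Hx] [Sy Hy]; split; first exact: SM.
    move=> b Bb; rewrite (g_invM TG) -!(g_assoc TG); split.
      by apply: (Hx _ (Hy _ Bb).1).1.
    by apply: (Hy _ (Hx _ Bb).2).2.
  - move=> x [Sx Hx]; split; first exact: SV.
    by move=> b Bb; rewrite (g_invK TG); split; [apply: (Hx _ Bb).2|apply: (Hx _ Bb).1].
have WP : W' `&` S `<=` P.
  move=> w [[W0w W0iw] Sw]; split => // b Bb; have Sb := BS _ Bb.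
  rewrite BO'; split; split.
  - exact: W0w.
  - exact: SM.
  - exact: W0iw.
  - by apply: SM => //; apply: SV.
have Pfin : finite_set P.
  apply: Hfin => //; [exact: metrizable_subS PS met|exact: zd_subS PS zd].
have [X PX] := (finite_fsetP).1 Pfin.
have hZ := finite_isolated e (finmap.enum_fset X) (g_hausdorff TG).
have hWZ : nbhs e (W' `&` (fun z : T => forall a : T, a \in finmap.enum_fset X -> z = a -> a = e)) by exact: filterI.
set Q := (W' `&` _) in hWZ.
have oZ0 : open Q° := @open_interior T Q.
have Z0e : Q° e := hWZ.
have Z0sub : Q° `<=` Q by move=> z hz; apply: nbhs_singleton.
set Z0 := Q° in oZ0 Z0e Z0sub.
move=> x Sx.
exists ((fun y => mul (inv x) y) @^-1` Z0); split.
- by move: oZ0; apply: (continuousP _).1; exact: (mull_cont TG).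
- by rewrite /= (g_Vx TG).
apply/seteqP; split => y /=.
  move=> [Zy Sy]; have [Wy hy] := Z0sub _ Zy.
  have Py : P (mul (inv x) y) by apply: WP; split => //; apply: SM => //; apply: SV.
  move: Py; rewrite PX /= => /hy /(_ erefl) E.
  by rewrite -(g_xVK TG x y) E (g_1e TG).
by move=> ->; split => //; rewrite (g_Vx TG).
Qed.
End Core.


Section Easy.
Context {T : topologicalType} (mul : T -> T -> T) (e : T) (inv : T -> T).
Hypothesis TG : topological_group mul e inv.

Lemma easy_dir : closed_zd_metrizable_subgroups_discrete mul e inv ->
  compact_zd_metrizable_subgroups_finite mul e inv.
Proof.
move=> Hd S Ssub Sc met zd.
have cS := compact_closed (g_hausdorff TG) Sc.
have dS := Hd S Ssub cS zd met.
apply: contrapT => nfin.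
pose F := fun A : set T => finite_set (S `\` A).
have FF : ProperFilter F.
  split.
    by rewrite /F setD0.
  split.
  - by rewrite /F setDT.
  - move=> A B fA fB; rewrite /F; apply: (sub_finite_set (B := (S `\` A) `|` (S `\` B))).
      by move=> x [Sx /not_andP [nA|nB]]; [left|right].
    by rewrite finite_setU.
  - move=> A B AB fA; apply: sub_finite_set fA; move=> x [Sx nB]; split => // Ax; apply: nB; exact: AB.
have FS : F S by rewrite /F setDv.
have [p [Sp clp]] := Sc F FF FS.
have [U [oU Up US]] := dS p Sp.
have h1 : F (S `\` [set p]).
  rewrite /F; apply: (sub_finite_set (B := [set p])) => // x [Sx nx].
  by apply: contrapT => nxp; apply: nx; split.
have h2 : nbhs p U by exact: open_nbhs_nbhs.
have [y [[Sy ny] Uy]] := clp _ _ h1 h2.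
apply: ny; have : (U `&` S) y by split.
by rewrite US.
Qed.

Lemma part2_hyp (S : set T) : locally_countably_compact e -> closed S ->
  exists N, [/\ open N, N e & forall C, closed C -> C `&` S `<=` N -> seqcc (C `&` S)].
Proof.
move=> [U [oU Ue ccU]] cS; exists U; split => // C cC CSU u hu.
pose V N := fun y => exists W, [/\ open W, W y & forall n, (N <= n)%N -> ~ W (u n)].
have oV N : open (V N).
  rewrite openE => y [W [oW Wy H]]; apply: (@filterS _ _ _ W); last exact: open_nbhs_nbhs.
  by move=> z Wz; exists W; split.
have [y [cly Hy]] : exists y, closure U y /\
    forall W, nbhs y W -> forall N, exists n, (N <= n)%N /\ W (u n).
  apply: contrapT => hn.
  have cover : forall y, closure U y -> exists N, V N y.
    move=> y cly; apply: contrapT => nV; apply: hn; exists y; split => // W hW N.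
    apply: contrapT => nn; apply: nV; exists N.
    move: hW; rewrite nbhsE => -[W' [oW' W'y] W'W]; exists W'; split => // n Nn W'n.
    by apply: nn; exists n; split => //; apply: W'W.
  have [M HM] := ccU V oV cover.
  have : closure U (u M) by apply: subset_closure; apply: CSU; apply: hu.
  move=> /HM [n [nM [W [oW Wu H]]]].
  by apply: (H M) => //; apply: ltnW.
exists y; split => //.
have cCS : closed (C `&` S) by apply: closedI.
apply: cCS => B hB; have [n [_ Bn]] := Hy B hB 0%N; exists (u n); split => //.
Qed.

End Easy.


Lemma near_all_le {X : Type} (F : set_system X) (P : nat -> set X) k :
  Filter F -> (forall i, F (P i)) -> F (fun z => forall i, (i <= k)%N -> P i z).
Proof.
move=> FF hP; elim: k => [|k IH].
  by apply: filterS (hP 0%N) => z h i; rewrite leqn0 => /eqP ->.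
apply: filterS2 IH (hP k.+1) => z h1 h2 i; rewrite leq_eqVlt => /orP [/eqP ->//|].
by rewrite ltnS; apply: h1.
Qed.

Section GX.
Context {T : topologicalType} (mul : T -> T -> T) (e : T) (inv : T -> T).
Hypothesis TG : topological_group mul e inv.
Lemma g_idem a : mul a a = a -> a = e.
Proof. by move=> h; have := g_VxK TG a a; rewrite h (g_Vx TG). Qed.
Lemma g_cancel_l h p q : mul (inv (mul (inv h) p)) (mul (inv h) q) = mul (inv p) q.
Proof. by rewrite (g_invM TG) (g_invK TG) -(g_assoc TG) (g_xVK TG). Qed.
Lemma g_cancel_r h p q : mul (mul p (inv h)) (inv (mul q (inv h))) = mul p (inv q).
Proof. by rewrite (g_invM TG) (g_invK TG) -(g_assoc TG) (g_VxK TG). Qed.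
End GX.

Section Part1.
Context {T : topologicalType} (mul : T -> T -> T) (e : T) (inv : T -> T).
Hypothesis TG : topological_group mul e inv.

Lemma part1_hyp (S : set T) : locally_precompact mul e inv ->
  sequentially_complete mul e inv -> is_subgroup mul e inv S -> closed S ->
  metrizable_sub S ->
  exists N, [/\ open N, N e & forall C, closed C -> C `&` S `<=` N -> seqcc (C `&` S)].
Proof.
move=> [H [mulH [eH [invH [j [TGH rcH [[V [hV cV]] dense] [jinj jhom] [jc jemb]]]]]]].
move=> sc [Se SM SV] cS [d [d0 dsym dtri dtop]].
have je : j e = eH.
  by apply: (g_idem TGH); rewrite -jhom (g_e1 TG).
have jinv x : j (inv x) = invH (j x).
  by apply: (g_uniq_inv TGH); rewrite -jhom (g_Vx TG).
have hN : nbhs e (j @^-1` V) by apply: jc; rewrite je.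
move: hN; rewrite nbhsE => -[N [oN Ne] NV].
exists N; split => // C cC CSN u hu.
have [h [clh hcl]] : exists h, closure V h /\
    forall W, nbhs h W -> forall N, exists n, (N <= n)%N /\ W (j (u n)).
  have hF : (fmap (j \o u) \oo) (closure V).
    exists 0%N => // n _; apply: subset_closure; apply: NV; apply: CSN; exact: hu.
  have [h [clh clust]] := cV _ _ hF.
  exists h; split => // W hW M.
  have hA : (fmap (j \o u) \oo) [set z | exists n, (M <= n)%N /\ z = j (u n)].
    by exists M => // n Mn; exists n.
  have [z [[n [Mn ->]] Wz]] := clust _ _ hA hW.
  by exists n.
have hO : forall m, exists O, [/\ open O, O e & forall y, O y -> S y -> (d e y < / INR m.+1)%R].
  move=> m; exact: (@ball_open _ S d dtop e _ Se (inv_pos m)).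
have [O hO'] := choice hO.
have hVm : forall m, exists V', nbhs eH V' /\ j @^-1` V' `<=` O m.
  move=> m; rewrite -je; apply: jemb; apply: open_nbhs_nbhs.
  by case: (hO' m) => ? ? _; split.
have [Vm hVm'] := choice hVm.
have hQ : forall m, exists Q, nbhs eH Q /\ forall a b, Q a -> Q b ->
    Vm m (mulH (invH a) b) /\ Vm m (mulH a (invH b)).
  by move=> m; apply: (nbhs_sym TGH); case: (hVm' m).
have [Q hQ'] := choice hQ.
pose G k := fun z => forall i, (i <= k)%N -> Q i (mulH (invH h) z) /\ Q i (mulH z (invH h)).
have hG k : nbhs h (G k).
  apply: (near_all_le (P := fun i z => Q i (mulH (invH h) z) /\ Q i (mulH z (invH h)))) => i.
  apply: filterI.
    have := (@mull_cont H mulH eH invH TGH (invH h) h (Q i)); rewrite (g_Vx TGH) => /(_ (hQ' i).1).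
    done.
  have := (@mulr_cont H mulH eH invH TGH (invH h) h (Q i)); rewrite (g_xV TGH) => /(_ (hQ' i).1).
  done.
have hf : forall k, exists g : nat -> nat, forall M, (M <= g M)%N /\ G k (j (u (g M))).
  move=> k; have [g hg] := @choice nat nat (fun M n => (M <= n)%N /\ G k (j (u n))) (hcl _ (hG k)).
  by exists g.
have [f hf'] := choice hf.
pose fix ns k := if k is k'.+1 then f k (ns k').+1 else f 0%N 0%N.
have nsge : forall k, (k <= ns k)%N.
  elim=> [//|k IH] /=; have [h1 _] := hf' k.+1 (ns k).+1.
  by apply: leq_trans h1; rewrite ltnS.
have nsk k : (k <= ns k)%N /\ G k (j (u (ns k))).
  split; first exact: nsge.
  case: k => [|k] /=; first by have [_ ?] := hf' 0%N 0%N.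
  by have [_ ?] := hf' k.+1 (ns k).+1.
pose y k := u (ns k).
have Sy k : S (y k) by have [_ ?] := hu (ns k).
have cauchy : two_sided_cauchy_seq mul e inv y.
  move=> U hU; have [eps [e0 epsU]] := nbhs_ball dtop Se hU.
  have [M hM] := arch e0.
  exists M => k l Mk Ml.
  have [_ Gk] := nsk k; have [_ Gl] := nsk l.
  have [a1 a2] := Gk M Mk; have [b1 b2] := Gl M Ml.
  have [v1 _] := (hQ' M).2 _ _ a1 b1.
  have [_ v2] := (hQ' M).2 _ _ a2 b2.
  rewrite (g_cancel_l TGH) in v1; rewrite (g_cancel_r TGH) in v2.
  have S1 : S (mul (inv (y k)) (y l)) by apply: SM => //; apply: SV.
  have S2 : S (mul (y k) (inv (y l))) by apply: SM => //; apply: SV.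
  split; apply: epsU => //.
    have : O M (mul (inv (y k)) (y l)).
      by apply: (hVm' M).2; rewrite /= jhom jinv.
    by case: (hO' M) => _ _ /[apply] /(_ S1); lra.
  have : O M (mul (y k) (inv (y l))).
    by apply: (hVm' M).2; rewrite /= jhom jinv.
  by case: (hO' M) => _ _ /[apply] /(_ S2); lra.
have [x cvx] := sc y cauchy.
have ev : forall W, nbhs x W -> exists K, forall k, (K <= k)%N -> W (y k).
  by move=> W /cvx [K _ HK]; exists K => k Kk; apply: HK.
exists x; split.
  have cCS : closed (C `&` S) by apply: closedI.
  apply: cCS => B hB; have [K HK] := ev B hB.
  by exists (y K); split; [exact: hu | exact: HK].
move=> W hW M; have [K HK] := ev W hW.
exists (ns (maxn K M)); split.
  by apply: (leq_trans _ (nsge _)); apply: leq_maxr.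
by apply: HK; apply: leq_maxl.
Qed.
End Part1.

Theorem proposition2p15 :
  (forall (T : topologicalType) (mul : T -> T -> T) (e : T) (inv : T -> T),
      topological_group mul e inv ->
      locally_precompact mul e inv ->
      sequentially_complete mul e inv ->
      (closed_zd_metrizable_subgroups_discrete mul e inv <->
       compact_zd_metrizable_subgroups_finite mul e inv)) /\
  (forall (T : topologicalType) (mul : T -> T -> T) (e : T) (inv : T -> T),
      topological_group mul e inv ->
      locally_countably_compact e ->
      (closed_zd_metrizable_subgroups_discrete mul e inv <->
       compact_zd_metrizable_subgroups_finite mul e inv)).
Proof.
split.
- move=> T mul e inv TG lp sc; split; first exact: easy_dir TG.
  move=> Hfin S Ssub cS zd met.
  have [N [oN Ne Hcc]] := part1_hyp TG lp sc Ssub cS met.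
  exact: (core TG Ssub zd met oN Ne Hcc Hfin).
- move=> T mul e inv TG lcc; split; first exact: easy_dir TG.
  move=> Hfin S Ssub cS zd met.
  have [N [oN Ne Hcc]] := part2_hyp lcc cS.
  exact: (core TG Ssub zd met oN Ne Hcc Hfin).
Qed.
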